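(* Let $\mathscr{A}$ be a closed set of games and $(\mathcal{Q},\mathcal{P})$ a reduced bipartite monoid. The following are equivalent: (i) $(\mathcal{Q},\mathcal{P})\cong\mathcal{Q}(\mathscr{A})$; (ii) there exists a surjective monoid homomorphism $\Phi:\mathscr{A}\to\mathcal{Q}$ (with respect to disjunctive sum on $\mathscr{A}$) such that for every $G\in\mathscr{A}$: $\Phi(G)\in\mathcal{P}$ if and only if $G\neq0$ and $\Phi(G')\notin\mathcal{P}$ for every option $G'$ of $G$.
   Context: Games are finite, loopfree impartial games identified with the finite set of their options ($0=\{\}$); disjunctive sum $G+H=\{G'+H\}\cup\{G+H'\}$, making any set of games closed under $+$ and containing $0$ a commutative monoid. Misère outcome: $o^-(G)=\mathscr{P}$ iff $G\neq0$ and every option has outcome $\mathscr{N}$; otherwise $\mathscr{N}$. A set of games is closed if it contains all options of its members and is closed under $+$. For closed $\mathscr{A}$: $G\equiv_\mathscr{A}H$ iff $o^-(G+X)=o^-(H+X)$ for all $X\in\mathscr{A}$; $\mathcal{Q}(\mathscr{A})$ is the bipartite monoid of $\equiv_\mathscr{A}$-classes ($[G][H]=[G+H]$) with distinguished subset the classes of misère $\mathscr{P}$-positions. A bipartite monoid is a pair (commutative monoid, subset); isomorphism means monoid isomorphism carrying the subset onto the subset. $(\mathcal{Q},\mathcal{P})$ is reduced if for any distinct $x,y\in\mathcal{Q}$ there is $z$ with exactly one of $xz,yz$ in $\mathcal{P}$. *)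

(* Defs.v *)
From Stdlib Require Import List ClassicalEpsilon.
Import ListNotations.
Set Implicit Arguments.

(** Games as finite rooted trees; a game is identified with the (finite) set
    of its options, so game identity is hereditary extensional set equality
    [geq] below.  Sets of games / functions on games are modelled as
    [geq]-saturated predicates / [geq]-respecting functions. *)
Inductive game : Type := Node : list game -> game.

Definition opts (G : game) : list game := match G with Node l => l end.

Definition zero : game := Node nil.

Inductive geq : game -> game -> Prop :=
| geq_intro (l1 l2 : list game) :
    (forall a, In a l1 -> exists b, In b l2 /\ geq a b) ->
    (forall b, In b l2 -> exists a, In a l1 /\ geq a b) ->
    geq (Node l1) (Node l2).

(** disjunctive sum: G + H = {G' + H} u {G + H'} *)
Fixpoint gsum (G H : game) {struct G} : game :=
  match G with
  | Node lg =>
      let fix aux (H : game) : game :=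
        match H with
        | Node lh => Node (map (fun g => gsum g H) lg ++ map aux lh)
        end
      in aux H
  end.

(** misère outcome: [ppos G = true] iff o^-(G) = P *)
Fixpoint ppos (G : game) : bool :=
  match G with
  | Node nil => false
  | Node l => forallb (fun g => negb (ppos g)) l
  end.

Definition closed_set (A : game -> Prop) : Prop :=
  (forall G H, geq G H -> A G -> A H) /\
  (forall G G', A G -> In G' (opts G) -> A G') /\
  (forall G H, A G -> A H -> A (gsum G H)).

Definition equivA (A : game -> Prop) (G H : game) : Prop :=
  forall X, A X -> ppos (gsum G X) = ppos (gsum H X).

(** The quotient Q(A): elements are the equivalence classes (as predicates). *)
Definition clsA (A : game -> Prop) (G : game) : game -> Prop :=
  fun H => A H /\ equivA A G H.

Definition is_clsA (A : game -> Prop) (c : game -> Prop) : Prop :=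
  exists G, A G /\ c = clsA A G.

Definition rep (c : game -> Prop) : game :=
  epsilon (inhabits zero) (fun G => c G).

Definition qmul (A : game -> Prop) (c d : game -> Prop) : game -> Prop :=
  clsA A (gsum (rep c) (rep d)).

Definition qone (A : game -> Prop) : game -> Prop := clsA A zero.

Definition qP (c : game -> Prop) : Prop := exists G, c G /\ ppos G = true.

Record bimonoid := BiMonoid {
  bcar : Type;
  bmul : bcar -> bcar -> bcar;
  bone : bcar;
  bmulA : forall x y z, bmul x (bmul y z) = bmul (bmul x y) z;
  bmulC : forall x y, bmul x y = bmul y x;
  bmul1 : forall x, bmul bone x = x;
  bP : bcar -> Prop
}.

Definition reduced (Q : bimonoid) : Prop :=
  forall x y : bcar Q, x <> y ->
    exists z, ~ (bP Q (bmul Q x z) <-> bP Q (bmul Q y z)).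

Definition iso_QA (Q : bimonoid) (A : game -> Prop) : Prop :=
  exists f : bcar Q -> (game -> Prop),
    (forall x, is_clsA A (f x)) /\
    (forall x y, f x = f y -> x = y) /\
    (forall c, is_clsA A c -> exists x, f x = c) /\
    (forall x y, f (bmul Q x y) = qmul A (f x) (f y)) /\
    f (bone Q) = qone A /\
    (forall x, bP Q x <-> qP (f x)).

Definition good_hom (Q : bimonoid) (A : game -> Prop) : Prop :=
  exists Phi : game -> bcar Q,
    (forall G H, A G -> geq G H -> Phi G = Phi H) /\
    Phi zero = bone Q /\
    (forall G H, A G -> A H -> Phi (gsum G H) = bmul Q (Phi G) (Phi H)) /\
    (forall q, exists G, A G /\ Phi G = q) /\
    (forall G, A G ->
       (bP Q (Phi G) <->
        (opts G <> nil /\ forall G', In G' (opts G) -> ~ bP Q (Phi G')))).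

(* Main.v *)
Require Import Defs.
From Stdlib Require Import List ClassicalEpsilon Classical Bool FunctionalExtensionality PropExtensionality.
Import ListNotations.

Definition game_ind' (P : game -> Prop)
  (Hn : forall l, (forall g, In g l -> P g) -> P (Node l)) : forall G, P G :=
  fix IH (G : game) : P G :=
  match G with Node l => Hn l ((fix aux (l : list game) : forall g, In g l -> P g :=
     match l with
     | nil => fun g Hin => False_ind _ Hin
     | cons a l' => fun g Hin => match Hin with
         | or_introl e => eq_ind a P (IH a) g e
         | or_intror Hin' => aux l' g Hin' end
     end) l) end.

Lemma gsum_node lg lh : gsum (Node lg) (Node lh) =
  Node (map (fun g => gsum g (Node lh)) lg ++ map (fun h => gsum (Node lg) h) lh).
Proof. reflexivity. Qed.

Lemma in_gsum G H x : In x (opts (gsum G H)) <->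
  (exists g, In g (opts G) /\ x = gsum g H) \/ (exists h, In h (opts H) /\ x = gsum G h).
Proof.
  destruct G as [lg], H as [lh]. rewrite gsum_node. simpl.
  rewrite in_app_iff, !in_map_iff.
  split; intros [[y [E Hy]]|[y [E Hy]]]; [left|right|left|right]; exists y; auto.
Qed.

Lemma geq_I G H : (forall a, In a (opts G) -> exists b, In b (opts H) /\ geq a b) ->
  (forall b, In b (opts H) -> exists a, In a (opts G) /\ geq a b) -> geq G H.
Proof. destruct G, H; simpl; constructor; auto. Qed.

Lemma geq_E G H : geq G H -> (forall a, In a (opts G) -> exists b, In b (opts H) /\ geq a b) /\
  (forall b, In b (opts H) -> exists a, In a (opts G) /\ geq a b).
Proof. intro E; destruct E; simpl; auto. Qed.

Ltac inL := apply in_gsum; left; eexists; split; [eassumption|reflexivity].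
Ltac inR := apply in_gsum; right; eexists; split; [eassumption|reflexivity].

Lemma geq_refl G : geq G G.
Proof.
  induction G as [l IH] using game_ind'. apply geq_I; simpl; intros a Ha; exists a; auto.
Qed.

Lemma geq_sym : forall G H, geq G H -> geq H G.
Proof.
  induction G as [l IH] using game_ind'. intros H E. apply geq_E in E as [E1 E2].
  apply geq_I.
  - intros b Hb. destruct (E2 b Hb) as [a [Ha Hab]]. exists a; auto.
  - intros a Ha. destruct (E1 a Ha) as [b [Hb Hab]]. exists b; auto.
Qed.

Lemma geq_trans : forall G H K, geq G H -> geq H K -> geq G K.
Proof.
  induction G as [l IH] using game_ind'. intros H K E F.
  apply geq_E in E as [E1 E2]. apply geq_E in F as [F1 F2].
  apply geq_I.
  - intros a Ha. destruct (E1 a Ha) as [b [Hb Hab]]. destruct (F1 b Hb) as [c [Hc Hbc]].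
    exists c; split; auto. eapply IH; eauto.
  - intros c Hc. destruct (F2 c Hc) as [b [Hb Hbc]]. destruct (E2 b Hb) as [a [Ha Hab]].
    exists a; split; auto. eapply IH; eauto.
Qed.

Lemma ppos_node l : ppos (Node l) = true <-> l <> nil /\ forall g, In g l -> ppos g = false.
Proof.
  destruct l as [|a l].
  - simpl. split; [discriminate| intros [H _]; congruence].
  - change (forallb (fun g => negb (ppos g)) (a :: l) = true <-> (a :: l <> nil /\ forall g, In g (a :: l) -> ppos g = false)).
    rewrite forallb_forall. split.
    + intros H; split; [discriminate|]. intros g Hg. apply negb_true_iff; auto.
    + intros [_ H] g Hg. apply negb_true_iff; auto.
Qed.

Lemma ppos_geq : forall G H, geq G H -> ppos G = ppos H.
Proof.
  induction G as [l IH] using game_ind'. intros [l'] E.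
  apply geq_E in E as [E1 E2]; simpl in E1, E2.
  apply eq_iff_eq_true. rewrite !ppos_node. split; intros [Hn Hall]; split.
  - destruct l as [|a l]; [congruence|]. destruct (E1 a (or_introl eq_refl)) as [b [Hb _]].
    destruct l'; [destruct Hb|discriminate].
  - intros h Hh. destruct (E2 h Hh) as [g [Hg E]]. rewrite <- (IH g Hg h E). auto.
  - destruct l' as [|a l']; [congruence|]. destruct (E2 a (or_introl eq_refl)) as [b [Hb _]].
    destruct l; [destruct Hb|discriminate].
  - intros g Hg. destruct (E1 g Hg) as [h [Hh E]]. rewrite (IH g Hg h E). auto.
Qed.

Lemma gsum_comm : forall G H, geq (gsum G H) (gsum H G).
Proof.
  induction G as [lg IHg] using game_ind'. intro H.
  induction H as [lh IHh] using game_ind'.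
  apply geq_I.
  - intros a Ha. apply in_gsum in Ha as [[g [Hg ->]]|[h [Hh ->]]].
    + exists (gsum (Node lh) g). split; [inR|]. apply IHg; auto.
    + exists (gsum h (Node lg)). split; [inL|]. apply IHh; auto.
  - intros b Hb. apply in_gsum in Hb as [[h [Hh ->]]|[g [Hg ->]]].
    + exists (gsum (Node lg) h). split; [inR|]. apply IHh; auto.
    + exists (gsum g (Node lh)). split; [inL|]. apply IHg; auto.
Qed.

Lemma gsum_assoc : forall G H K, geq (gsum (gsum G H) K) (gsum G (gsum H K)).
Proof.
  induction G as [lg IHg] using game_ind'. intro H.
  induction H as [lh IHh] using game_ind'. intro K.
  induction K as [lk IHk] using game_ind'.
  apply geq_I.
  - intros a Ha. apply in_gsum in Ha as [[x [Hx ->]]|[k [Hk ->]]].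
    + apply in_gsum in Hx as [[g [Hg ->]]|[h [Hh ->]]].
      * exists (gsum g (gsum (Node lh) (Node lk))). split; [inL|]. apply IHg; auto.
      * exists (gsum (Node lg) (gsum h (Node lk))). split.
        { apply in_gsum; right; eexists; split; [|reflexivity]. inL. }
        apply IHh; auto.
    + exists (gsum (Node lg) (gsum (Node lh) k)). split.
      { apply in_gsum; right; eexists; split; [|reflexivity]. inR. }
      apply IHk; auto.
  - intros b Hb. apply in_gsum in Hb as [[g [Hg ->]]|[y [Hy ->]]].
    + exists (gsum (gsum g (Node lh)) (Node lk)). split.
      { apply in_gsum; left; eexists; split; [|reflexivity]. inL. }
      apply IHg; auto.
    + apply in_gsum in Hy as [[h [Hh ->]]|[k [Hk ->]]].
      * exists (gsum (gsum (Node lg) h) (Node lk)). split.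
        { apply in_gsum; left; eexists; split; [|reflexivity]. inR. }
        apply IHh; auto.
      * exists (gsum (gsum (Node lg) (Node lh)) k). split; [inR|]. apply IHk; auto.
Qed.

Lemma gsum_geq_l : forall G G', geq G G' -> forall H, geq (gsum G H) (gsum G' H).
Proof.
  induction G as [lg IHg] using game_ind'. intros G' E H.
  pose proof (geq_E _ _ E) as [E1 E2]; simpl in E1.
  induction H as [lh IHh] using game_ind'.
  apply geq_I.
  - intros a Ha. apply in_gsum in Ha as [[g [Hg ->]]|[h [Hh ->]]].
    + destruct (E1 g Hg) as [g' [Hg' Hgg]]. exists (gsum g' (Node lh)). split; [inL|].
      apply IHg; auto.
    + exists (gsum G' h). split; [inR|]. apply IHh; auto.
  - intros b Hb. apply in_gsum in Hb as [[g' [Hg' ->]]|[h [Hh ->]]].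
    + destruct (E2 g' Hg') as [g [Hg Hgg]]. exists (gsum g (Node lh)). split; [inL|].
      apply IHg; auto.
    + exists (gsum (Node lg) h). split; [inR|]. apply IHh; auto.
Qed.

Lemma gsum_zero : forall G, geq (gsum G zero) G.
Proof.
  induction G as [lg IHg] using game_ind'.
  apply geq_I.
  - intros a Ha. apply in_gsum in Ha as [[g [Hg ->]]|[h [Hh ->]]]; [|destruct Hh].
    exists g; auto.
  - intros b Hb. exists (gsum b zero). split; [inL|]. auto.
Qed.

Lemma cls_eq A G H : equivA A G H -> clsA A G = clsA A H.
Proof.
  intro E. apply functional_extensionality; intro K. apply propositional_extensionality.
  unfold clsA, equivA in *. split; intros [HK HE]; split; auto; intros X HX.
  - rewrite <- (E X HX); auto.
  - rewrite (E X HX); auto.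
Qed.

Lemma rep_spec A G : A G -> A (rep (clsA A G)) /\ equivA A G (rep (clsA A G)).
Proof.
  intro HG. unfold rep.
  exact (epsilon_spec (inhabits zero) (fun H => clsA A G H)
           (ex_intro _ G (conj HG (fun X _ => eq_refl)))).
Qed.

Lemma zero_in A : closed_set A -> forall G, A G -> A zero.
Proof.
  intros [_ [Hop _]]. induction G as [l IH] using game_ind'. intro HG.
  destruct l as [|a l]; [exact HG|]. apply (IH a (or_introl eq_refl)).
  apply (Hop _ a HG). left; reflexivity.
Qed.

Lemma equiv_cong A G H R S : closed_set A -> A G -> A H -> A R -> A S ->
  equivA A G R -> equivA A H S -> equivA A (gsum G H) (gsum R S).
Proof.
  intros [_ [_ HA]] AG AH AR AS HGR HHS X AX.
  rewrite (ppos_geq _ _ (gsum_assoc G H X)).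
  rewrite (HGR _ (HA H X AH AX)).
  rewrite <- (ppos_geq _ _ (gsum_assoc R H X)).
  rewrite (ppos_geq _ _ (gsum_geq_l _ _ (gsum_comm R H) X)).
  rewrite (ppos_geq _ _ (gsum_assoc H R X)).
  rewrite (HHS _ (HA R X AR AX)).
  rewrite <- (ppos_geq _ _ (gsum_assoc S R X)).
  rewrite (ppos_geq _ _ (gsum_geq_l _ _ (gsum_comm S R) X)).
  reflexivity.
Qed.

Theorem mainTheorem15 (A : game -> Prop) (Q : bimonoid) :
  closed_set A -> reduced Q ->
  (iso_QA Q A <-> good_hom Q A).
Proof.
  intros HC Hred. pose proof HC as [Hsat [Hop Hadd]]. split.
  - intros [f [Hcl [Hinj [Hsur [Hhom [Hone HP]]]]]].
    assert (Az : A zero).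
    { destruct (Hcl (bone Q)) as [G [AG _]]. exact (@zero_in A HC G AG). }
    set (Phi := fun G => epsilon (inhabits (bone Q)) (fun x => f x = clsA A G)).
    assert (HPhi : forall G, A G -> f (Phi G) = clsA A G).
    { intros G AG. unfold Phi.
      apply (epsilon_spec (inhabits (bone Q)) (fun x => f x = clsA A G)).
      apply Hsur. exists G; auto. }
    assert (HPhiu : forall G x, A G -> f x = clsA A G -> Phi G = x).
    { intros G x AG E. apply Hinj. rewrite HPhi; auto. }
    assert (KP : forall G, A G -> (bP Q (Phi G) <-> ppos G = true)).
    { intros G AG. rewrite HP, HPhi by auto. split.
      - intros [H [[AH EGH] pH]]. specialize (EGH zero Az).
        rewrite (ppos_geq _ _ (gsum_zero G)), (ppos_geq _ _ (gsum_zero H)) in EGH.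
        congruence.
      - intros pG. exists G. split; auto. split; auto. intros X _; reflexivity. }
    exists Phi. split; [|split; [|split; [|split]]].
    + intros G H AG E. assert (AH : A H) by (eapply Hsat; eauto).
      symmetry. apply HPhiu; auto. rewrite HPhi by auto. apply cls_eq.
      intros X AX. apply ppos_geq. apply gsum_geq_l; auto.
    + apply HPhiu; auto.
    + intros G H AG AH. apply HPhiu; auto. rewrite Hhom, !HPhi by auto. unfold qmul.
      symmetry. apply cls_eq.
      destruct (@rep_spec A _ AG), (@rep_spec A _ AH). apply equiv_cong; auto.
    + intros q. destruct (Hcl q) as [G [AG E]]. exists G; split; auto.
    + intros G AG. rewrite KP by auto. destruct G as [l]. simpl opts. rewrite ppos_node.
      split; intros [Hn Hall]; split; auto; intros G' HG'.
      * rewrite KP by (eapply Hop; eauto). rewrite Hall; auto; discriminate.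
      * apply not_true_iff_false. rewrite <- KP by (eapply Hop; eauto). auto.
  - intros [Phi [Hresp [Hz [Hhom [Hsur HPc]]]]].
    assert (KP : forall G, A G -> (bP Q (Phi G) <-> ppos G = true)).
    { induction G as [l IH] using game_ind'. intro AG. rewrite HPc by auto.
      simpl opts. rewrite ppos_node.
      split; intros [Hn Hall]; split; auto; intros G' HG'.
      - assert (A G') by (eapply Hop; eauto; exact HG').
        apply not_true_iff_false. rewrite <- IH by auto. auto.
      - assert (A G') by (eapply Hop; eauto; exact HG').
        rewrite IH by auto. rewrite Hall; auto; discriminate. }
    assert (E1 : forall G H, A G -> A H -> Phi G = Phi H -> equivA A G H).
    { intros G H AG AH E X AX. apply eq_iff_eq_true.
      rewrite <- !KP by auto. rewrite !Hhom by auto. rewrite E. tauto. }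
    assert (E2 : forall G H, A G -> A H -> equivA A G H -> Phi G = Phi H).
    { intros G H AG AH E. destruct (classic (Phi G = Phi H)) as [|Hne]; auto.
      destruct (Hred _ _ Hne) as [z Hz']. destruct (Hsur z) as [X [AX <-]].
      exfalso. apply Hz'. rewrite <- !Hhom by auto. rewrite !KP by auto.
      rewrite (E X AX). tauto. }
    set (g := fun x => epsilon (inhabits zero) (fun G => A G /\ Phi G = x)).
    assert (Hg : forall x, A (g x) /\ Phi (g x) = x).
    { intro x. apply (epsilon_spec (inhabits zero) (fun G => A G /\ Phi G = x)).
      apply Hsur. }
    assert (CE : forall G H, A G -> A H -> Phi G = Phi H -> clsA A G = clsA A H).
    { intros; apply cls_eq; auto. }
    exists (fun x => clsA A (g x)). split; [|split; [|split; [|split; [|split]]]].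
    + intros x. exists (g x). split; auto. apply Hg.
    + intros x y E. destruct (Hg x) as [Ax Px], (Hg y) as [Ay Py].
      assert (Hy : clsA A (g x) (g y)) by (rewrite E; split; auto; intros X _; auto).
      destruct Hy as [_ Hy]. rewrite <- Px, <- Py. apply E2; auto.
    + intros c [G [AG ->]]. exists (Phi G). destruct (Hg (Phi G)) as [A1 P1].
      apply CE; auto.
    + intros x y. unfold qmul. destruct (Hg x) as [Ax Px], (Hg y) as [Ay Py].
      destruct (@rep_spec A _ Ax) as [AR ER], (@rep_spec A _ Ay) as [AS ES].
      destruct (Hg (bmul Q x y)) as [Axy Pxy].
      apply CE; auto. rewrite Pxy, Hhom by auto.
      rewrite <- (E2 _ _ Ax AR ER), <- (E2 _ _ Ay AS ES). congruence.
    + unfold qone. destruct (Hg (bone Q)) as [A1 P1].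
      assert (Az : A zero) by exact (@zero_in A HC _ A1).
      apply CE; auto. congruence.
    + intros x. destruct (Hg x) as [Ax Px]. split.
      * intros Hx. exists (g x). split; [split; auto; intros X _; auto|].
        apply KP; auto. rewrite Px; auto.
      * intros [H [[AH EH] pH]]. rewrite <- Px. rewrite (E2 _ _ Ax AH EH). apply KP; auto.
Qed.
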